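(* Let $X$ be a real Hilbert space, let $\alpha_1,\alpha_2\in\mathbb{R}$, let $\beta_1,\beta_2>0$, suppose $\alpha_1+\beta_1>0$ and $\alpha_2+\beta_2>0$, and suppose that either $\tfrac{\beta_1\beta_2}{(\alpha_1+\beta_1)(\alpha_2+\beta_2)}<1$ or $\max\big\{\tfrac{\beta_1}{\alpha_1+\beta_1},\tfrac{\beta_2}{\alpha_2+\beta_2}\big\}=1$. Set $\kappa=(\alpha_1+\beta_1)(\alpha_2+\beta_2)$ and $$\theta=\begin{cases}\dfrac{\beta_1\alpha_2+\beta_2\alpha_1}{\alpha_1\alpha_2+\alpha_1\beta_2+\alpha_2\beta_1},&\text{if }\tfrac{\beta_1\beta_2}{(\alpha_1+\beta_1)(\alpha_2+\beta_2)}<1;\\[2mm] 1,&\text{if }\max\big\{\tfrac{\beta_1}{\alpha_1+\beta_1},\tfrac{\beta_2}{\alpha_2+\beta_2}\big\}=1.\end{cases}$$ Suppose $R_1\colon X\to X$ admits an $(\alpha_1,\beta_1)$-I-N decomposition and $R_2\colon X\to X$ admits an $(\alpha_2,\beta_2)$-I-N decomposition. Then $\theta\in\left]0,+\infty\right[$ and there exists a nonexpansive $N\colon X\to X$ such that $R_2R_1=\kappa(1-\theta)\mathrm{Id}+\kappa\theta N$, i.e., $R_2R_1$ is $\kappa$-scaled $\theta$-conically nonexpansive.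
   Context: For $(\alpha,\beta)\in\mathbb{R}\times[0,\infty[$, an operator $R\colon X\to X$ admits an $(\alpha,\beta)$-I-N (Identity-Nonexpansive) decomposition if there exists a nonexpansive ($1$-Lipschitz) $N\colon X\to X$ with $R=\alpha\mathrm{Id}+\beta N$. *)

(* Defs.v *)
From Stdlib Require Import Reals.
Open Scope R_scope.

Record RealHilbert := {
  hcar :> Type;
  hzero : hcar;
  hadd : hcar -> hcar -> hcar;
  hopp : hcar -> hcar;
  hscal : R -> hcar -> hcar;
  hinner : hcar -> hcar -> R;
  hadd_assoc : forall x y z, hadd x (hadd y z) = hadd (hadd x y) z;
  hadd_comm : forall x y, hadd x y = hadd y x;
  hadd_0 : forall x, hadd x hzero = x;
  hadd_opp : forall x, hadd x (hopp x) = hzero;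
  hscal_assoc : forall a b x, hscal a (hscal b x) = hscal (a * b) x;
  hscal_1 : forall x, hscal 1 x = x;
  hscal_distr_v : forall a x y, hscal a (hadd x y) = hadd (hscal a x) (hscal a y);
  hscal_distr_s : forall a b x, hscal (a + b) x = hadd (hscal a x) (hscal b x);
  hinner_sym : forall x y, hinner x y = hinner y x;
  hinner_add_l : forall x y z, hinner (hadd x y) z = hinner x z + hinner y z;
  hinner_scal_l : forall a x y, hinner (hscal a x) y = a * hinner x y;
  hinner_pos : forall x, 0 <= hinner x x;
  hinner_def : forall x, hinner x x = 0 -> x = hzero;
  hcomplete : forall u : nat -> hcar,
    (forall eps, eps > 0 -> exists N, forall m n, (m >= N)%nat -> (n >= N)%nat ->
       sqrt (hinner (hadd (u m) (hopp (u n))) (hadd (u m) (hopp (u n)))) < eps) ->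
    exists l, forall eps, eps > 0 -> exists N, forall n, (n >= N)%nat ->
       sqrt (hinner (hadd (u n) (hopp l)) (hadd (u n) (hopp l))) < eps
}.

Arguments hzero {r}.
Arguments hadd {r}.
Arguments hopp {r}.
Arguments hscal {r}.
Arguments hinner {r}.

Definition hnorm {X : RealHilbert} (x : X) : R := sqrt (hinner x x).

Definition nonexpansive {X : RealHilbert} (N : X -> X) : Prop :=
  forall x y : X, hnorm (hadd (N x) (hopp (N y))) <= hnorm (hadd x (hopp y)).

Definition IN_decomp {X : RealHilbert} (alpha beta : R) (Rop : X -> X) : Prop :=
  exists N : X -> X, nonexpansive N /\
    forall x : X, Rop x = hadd (hscal alpha x) (hscal beta (N x)).

(* Main.v *)
Require Import Defs.
From Stdlib Require Import Reals Lra Psatz.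
Open Scope R_scope.

Lemma hadd_0l (X : RealHilbert) (x : X) : hadd hzero x = x.
Proof. rewrite hadd_comm; apply hadd_0. Qed.

Lemma hscal_0 (X : RealHilbert) (x : X) : hscal 0 x = hzero.
Proof.
  assert (E : hscal 0 x = hadd (hscal 0 x) (hscal 0 x)).
  { rewrite <- hscal_distr_s. f_equal. ring. }
  transitivity (hadd (hscal 0 x) (hadd (hscal 0 x) (hopp (hscal 0 x)))).
  - rewrite hadd_opp, hadd_0; reflexivity.
  - rewrite hadd_assoc, <- E, hadd_opp; reflexivity.
Qed.

Lemma hopp_scal (X : RealHilbert) (x : X) : hopp x = hscal (-1) x.
Proof.
  transitivity (hadd (hadd (hscal (-1) x) x) (hopp x)).
  - replace (hadd (hscal (-1) x) x) with (hzero (r:=X)).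
    + rewrite hadd_0l; reflexivity.
    + rewrite <- (hscal_1 X x) at 2. rewrite <- hscal_distr_s.
      replace (-1 + 1) with 0 by ring. rewrite hscal_0; reflexivity.
  - rewrite <- hadd_assoc, hadd_opp, hadd_0; reflexivity.
Qed.

Lemma swap4 (X : RealHilbert) (a b c d : X) :
  hadd (hadd a b) (hadd c d) = hadd (hadd a c) (hadd b d).
Proof.
  rewrite <- !hadd_assoc. f_equal. rewrite !hadd_assoc. f_equal. apply hadd_comm.
Qed.

Lemma hinner_add_r (X : RealHilbert) (x y z : X) :
  hinner x (hadd y z) = hinner x y + hinner x z.
Proof. rewrite hinner_sym, hinner_add_l, (hinner_sym _ y), (hinner_sym _ z); reflexivity. Qed.

Lemma hinner_scal_r (X : RealHilbert) a (x y : X) :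
  hinner x (hscal a y) = a * hinner x y.
Proof. rewrite hinner_sym, hinner_scal_l, (hinner_sym _ y); reflexivity. Qed.

Definition lin3 {X : RealHilbert} (c1 c2 c3 : R) (e1 e2 e3 : X) : X :=
  hadd (hscal c1 e1) (hadd (hscal c2 e2) (hscal c3 e3)).

Lemma lin3_diff (X : RealHilbert) c1 c2 c3 (e1 e2 e3 f1 f2 f3 : X) :
  hadd (lin3 c1 c2 c3 e1 e2 e3) (hopp (lin3 c1 c2 c3 f1 f2 f3)) =
  lin3 c1 c2 c3 (hadd e1 (hopp f1)) (hadd e2 (hopp f2)) (hadd e3 (hopp f3)).
Proof.
  unfold lin3. rewrite !(hopp_scal _ (hadd _ _)), !(hopp_scal _ f1), !(hopp_scal _ f2),
    !(hopp_scal _ f3).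
  rewrite !hscal_distr_v, !hscal_assoc.
  replace (-1 * c1) with (c1 * -1) by ring.
  replace (-1 * c2) with (c2 * -1) by ring.
  replace (-1 * c3) with (c3 * -1) by ring.
  rewrite swap4. f_equal. apply swap4.
Qed.

Lemma lin3_scal (X : RealHilbert) r c1 c2 c3 (e1 e2 e3 : X) :
  hscal r (lin3 c1 c2 c3 e1 e2 e3) = lin3 (r*c1) (r*c2) (r*c3) e1 e2 e3.
Proof. unfold lin3. rewrite !hscal_distr_v, !hscal_assoc. reflexivity. Qed.

Lemma lin3_add1 (X : RealHilbert) r c1 c2 c3 (e1 e2 e3 : X) :
  hadd (hscal r e1) (lin3 c1 c2 c3 e1 e2 e3) = lin3 (r+c1) c2 c3 e1 e2 e3.
Proof. unfold lin3. rewrite hadd_assoc, <- hscal_distr_s. reflexivity. Qed.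

Lemma lin3_inner (X : RealHilbert) c1 c2 c3 (e1 e2 e3 : X) :
  hinner (lin3 c1 c2 c3 e1 e2 e3) (lin3 c1 c2 c3 e1 e2 e3) =
  c1*c1*hinner e1 e1 + c2*c2*hinner e2 e2 + c3*c3*hinner e3 e3
  + 2*c1*c2*hinner e1 e2 + 2*c1*c3*hinner e1 e3 + 2*c2*c3*hinner e2 e3.
Proof.
  unfold lin3. rewrite !hinner_add_l, !hinner_add_r, !hinner_scal_l, !hinner_scal_r.
  rewrite (hinner_sym _ e2 e1), (hinner_sym _ e3 e1), (hinner_sym _ e3 e2). ring.
Qed.

Lemma lin3_pos (X : RealHilbert) c1 c2 c3 (e1 e2 e3 : X) :
  0 <= c1*c1*hinner e1 e1 + c2*c2*hinner e2 e2 + c3*c3*hinner e3 e3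
  + 2*c1*c2*hinner e1 e2 + 2*c1*c3*hinner e1 e3 + 2*c2*c3*hinner e2 e3.
Proof. rewrite <- lin3_inner. apply hinner_pos. Qed.

Lemma ne_sq (X : RealHilbert) (x y : X) : hnorm x <= hnorm y -> hinner x x <= hinner y y.
Proof. unfold hnorm; intro H; apply sqrt_le_0; auto using hinner_pos. Qed.

Lemma build (X : RealHilbert) a1 b1 a2 b2 (R1 R2 : X -> X) c e A B C :
  IN_decomp a1 b1 R1 -> IN_decomp a2 b2 R2 ->
  c + e * A = a1 * a2 -> e * B = a2 * b1 -> e * C = b2 ->
  (forall p n1 n2 : X, hinner n1 n1 <= hinner p p ->
     hinner n2 n2 <= hinner (lin3 a1 b1 0 p n1 n2) (lin3 a1 b1 0 p n1 n2) ->
     hinner (lin3 A B C p n1 n2) (lin3 A B C p n1 n2) <= hinner p p) ->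
  exists N : X -> X, nonexpansive N /\
    forall x : X, R2 (R1 x) = hadd (hscal c x) (hscal e (N x)).
Proof.
  intros [N1 [HN1 E1]] [N2 [HN2 E2]] Ec EB EC HP.
  assert (ER1 : forall x, R1 x = lin3 a1 b1 0 x (N1 x) (N2 (R1 x))).
  { intro x. rewrite E1 at 1. unfold lin3. rewrite hscal_0, hadd_0. reflexivity. }
  exists (fun x => lin3 A B C x (N1 x) (N2 (R1 x))). split.
  - intros x y. unfold hnorm. apply sqrt_le_1_alt. cbv beta.
    rewrite lin3_diff. apply HP.
    + apply ne_sq, HN1.
    + rewrite <- lin3_diff, <- !ER1. apply ne_sq, HN2.
  - intro x. rewrite E2. rewrite (E1 x) at 1. rewrite lin3_scal, lin3_add1.
    unfold lin3. rewrite hscal_distr_v, !hscal_assoc, hadd_assoc.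
    rewrite Ec, EB, EC, (Rmult_comm a2 a1). reflexivity.
Qed.

Definition gq (c1 c2 c3 g11 g22 g33 g12 g13 g23 : R) : R :=
  c1*c1*g11 + c2*c2*g22 + c3*c3*g33 + 2*c1*c2*g12 + 2*c1*c3*g13 + 2*c2*c3*g23.

Lemma lin3_gq (X : RealHilbert) c1 c2 c3 (e1 e2 e3 : X) :
  hinner (lin3 c1 c2 c3 e1 e2 e3) (lin3 c1 c2 c3 e1 e2 e3) =
  gq c1 c2 c3 (hinner e1 e1) (hinner e2 e2) (hinner e3 e3) (hinner e1 e2) (hinner e1 e3) (hinner e2 e3).
Proof. apply lin3_inner. Qed.

Lemma gq_pos (X : RealHilbert) c1 c2 c3 (e1 e2 e3 : X) :
  0 <= gq c1 c2 c3 (hinner e1 e1) (hinner e2 e2) (hinner e3 e3) (hinner e1 e2) (hinner e1 e3) (hinner e2 e3).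
Proof. rewrite <- lin3_gq. apply hinner_pos. Qed.

Lemma case1_ineq (X : RealHilbert) a1 a2 b1 b2 (p n1 n2 : X)
  (hb1 : 0 < b1) (hb2 : 0 < b2) (h1 : 0 < a1 + b1) (h2 : 0 < a2 + b2)
  (hD : 0 < (a1+b1)*(a2+b2) - b1*b2) (hE : 0 < b1*a2 + b2*a1) :
  let k := (a1+b1)*(a2+b2) in
  let th := (b1 * a2 + b2 * a1) / (a1 * a2 + a1 * b2 + a2 * b1) in
  hinner n1 n1 <= hinner p p ->
  hinner n2 n2 <= hinner (lin3 a1 b1 0 p n1 n2) (lin3 a1 b1 0 p n1 n2) ->
  hinner (lin3 ((a1*a2 - k*(1-th))/(k*th)) (a2*b1/(k*th)) (b2/(k*th)) p n1 n2)
         (lin3 ((a1*a2 - k*(1-th))/(k*th)) (a2*b1/(k*th)) (b2/(k*th)) p n1 n2)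
    <= hinner p p.
Proof.
  intros k th H1 H2. rewrite !lin3_gq in *.
  set (s1 := a1 + b1) in *. set (s2 := a2 + b2) in *.
  set (k1 := a1/b1). set (k2 := a2/b2).
  pose proof (gq_pos X (k1*(1 - a1/s1) - k2*(a1/s1 - a1*a2/k))
                        (k1*(0 - b1/s1) - k2*(b1/s1 - a2*b1/k))
                        (k1*0 - k2*(0 - b2/k)) p n1 n2) as Hz.
  set (g11 := hinner p p) in *. set (g22 := hinner n1 n1) in *.
  set (g33 := hinner n2 n2) in *. set (g12 := hinner p n1) in *.
  set (g13 := hinner p n2) in *. set (g23 := hinner n1 n2) in *.
  set (Qz := gq _ _ _ g11 g22 g33 g12 g13 g23) in Hz.
  set (L := gq _ _ _ g11 g22 g33 g12 g13 g23).
  set (Q1 := gq a1 b1 0 g11 g22 g33 g12 g13 g23) in H2.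
  assert (hth : 0 < th).
  { unfold th. apply Rdiv_lt_0_compat; [lra|]. unfold s1, s2 in hD. nra. }
  assert (hk12 : 0 < k1 + k2).
  { unfold k1, k2. replace (a1/b1 + a2/b2) with ((b1*a2+b2*a1)/(b1*b2)) by (field; lra).
    apply Rdiv_lt_0_compat; nra. }
  assert (Id : th*th*(g11 - L) = th*(b1/s1)*(g11 - g22) + th*(b2/s2)/(s1*s1)*(Q1 - g33)
                                 + th/(k1+k2)*Qz).
  { unfold L, Q1, Qz, th, k, k1, k2, gq. unfold s1, s2 in *. field.
    repeat split; try lra. }
  assert (0 <= th*th*(g11 - L)).
  { rewrite Id. assert (0 <= th*(b1/s1)*(g11 - g22)).
    { apply Rmult_le_pos; [apply Rmult_le_pos; [lra|apply Rlt_le, Rdiv_lt_0_compat; lra]|lra]. }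
    assert (0 <= th*(b2/s2)/(s1*s1)*(Q1 - g33)).
    { apply Rmult_le_pos; [|lra]. apply Rlt_le. apply Rdiv_lt_0_compat; [|nra].
      apply Rmult_lt_0_compat; [lra|apply Rdiv_lt_0_compat; lra]. }
    assert (0 <= th/(k1+k2)*Qz).
    { apply Rmult_le_pos; [apply Rlt_le, Rdiv_lt_0_compat; lra|lra]. }
    lra. }
  assert (0 < th*th) by nra. nra.
Qed.

Lemma case2_ineq (X : RealHilbert) a1 a2 b1 b2 (p n1 n2 : X)
  (hb1 : 0 < b1) (hb2 : 0 < b2) (h1 : 0 <= a1) (h2 : 0 <= a2) :
  let k := (a1+b1)*(a2+b2) in
  hinner n1 n1 <= hinner p p ->
  hinner n2 n2 <= hinner (lin3 a1 b1 0 p n1 n2) (lin3 a1 b1 0 p n1 n2) ->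
  hinner (lin3 ((a1*a2 - k*(1-1))/(k*1)) (a2*b1/(k*1)) (b2/(k*1)) p n1 n2)
         (lin3 ((a1*a2 - k*(1-1))/(k*1)) (a2*b1/(k*1)) (b2/(k*1)) p n1 n2)
    <= hinner p p.
Proof.
  intros k H1 H2. rewrite !lin3_gq in *.
  pose proof (gq_pos X a1 b1 (-1) p n1 n2) as Hrn.
  pose proof (gq_pos X 1 (-1) 0 p n1 n2) as Hpn.
  set (g11 := hinner p p) in *. set (g22 := hinner n1 n1) in *.
  set (g33 := hinner n2 n2) in *. set (g12 := hinner p n1) in *.
  set (g13 := hinner p n2) in *. set (g23 := hinner n1 n2) in *.
  set (Q3 := gq a1 b1 (-1) g11 g22 g33 g12 g13 g23) in Hrn.
  set (Q4 := gq 1 (-1) 0 g11 g22 g33 g12 g13 g23) in Hpn.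
  set (L := gq _ _ _ g11 g22 g33 g12 g13 g23).
  set (Q1 := gq a1 b1 0 g11 g22 g33 g12 g13 g23) in H2.
  assert (hk : 0 < k) by (unfold k; nra).
  assert (Id : k*k*(g11 - L) = a2*b2*Q3 + (a2+b2)*b2*(Q1 - g33)
     + (a2+b2)*(a2+b2)*((a1+b1)*b1*(g11-g22) + a1*b1*Q4)).
  { unfold L, Q1, Q3, Q4, k, gq. field. lra. }
  assert (0 <= k*k*(g11 - L)).
  { rewrite Id. assert (0 <= a2*b2*Q3) by (apply Rmult_le_pos; nra).
    assert (0 <= (a2+b2)*b2*(Q1 - g33)) by (apply Rmult_le_pos; nra).
    assert (0 <= (a1+b1)*b1*(g11-g22)) by (apply Rmult_le_pos; nra).
    assert (0 <= a1*b1*Q4) by (apply Rmult_le_pos; nra).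
    assert (0 <= (a2+b2)*(a2+b2)*((a1+b1)*b1*(g11-g22) + a1*b1*Q4)) by
      (apply Rmult_le_pos; nra).
    lra. }
  assert (0 < k*k) by nra. nra.
Qed.

Theorem mainTheorem7 (X : RealHilbert) (a1 a2 b1 b2 : R)
  (hb1 : 0 < b1) (hb2 : 0 < b2)
  (h1 : 0 < a1 + b1) (h2 : 0 < a2 + b2)
  (hcase : b1 * b2 / ((a1 + b1) * (a2 + b2)) < 1 \/
           Rmax (b1 / (a1 + b1)) (b2 / (a2 + b2)) = 1)
  (R1 R2 : X -> X)
  (hR1 : IN_decomp a1 b1 R1) (hR2 : IN_decomp a2 b2 R2) :
  let kappa := (a1 + b1) * (a2 + b2) in
  let theta :=
    if Rlt_dec (b1 * b2 / ((a1 + b1) * (a2 + b2))) 1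
    then (b1 * a2 + b2 * a1) / (a1 * a2 + a1 * b2 + a2 * b1)
    else 1 in
  0 < theta /\
  exists N : X -> X, nonexpansive N /\
    forall x : X, R2 (R1 x) =
      hadd (hscal (kappa * (1 - theta)) x) (hscal (kappa * theta) (N x)).
Proof.
  intros kappa theta.
  assert (hk : 0 < kappa) by (unfold kappa; nra).
  unfold theta. destruct (Rlt_dec _ 1) as [Hlt|Hnlt].
  - assert (hD : 0 < (a1+b1)*(a2+b2) - b1*b2).
    { apply Rmult_lt_compat_r with (r := kappa) in Hlt; [|lra].
      unfold kappa in Hlt. field_simplify in Hlt; lra. }
    assert (hE : 0 < b1*a2 + b2*a1).
    { assert (HH : b1*b2 < (a1+b1)*(a2+b2)) by lra.
      destruct (Rle_or_lt (b1*a2 + b2*a1) 0) as [Hn|Hp]; [|exact Hp].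
      exfalso.
      assert (b1*(a2+b2) + b2*(a1+b1) <= 2*b1*b2) by lra.
      assert (0 <= (b1*(a2+b2) - b2*(a1+b1))^2) by nra.
      nra. }
    set (th := (b1 * a2 + b2 * a1) / (a1 * a2 + a1 * b2 + a2 * b1)).
    assert (hth : 0 < th).
    { unfold th. apply Rdiv_lt_0_compat; [lra|nra]. }
    split; [exact hth|].
    apply (build X a1 b1 a2 b2 R1 R2 _ _ ((a1*a2 - kappa*(1-th))/(kappa*th))
             (a2*b1/(kappa*th)) (b2/(kappa*th)) hR1 hR2).
    + field. split; lra.
    + field. split; lra.
    + field. split; lra.
    + intros p n1 n2 H1 H2. exact (case1_ineq X a1 a2 b1 b2 p n1 n2 hb1 hb2 h1 h2 hD hE H1 H2).
  - destruct hcase as [C|C]; [contradiction|].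
    assert (ha1 : 0 <= a1).
    { pose proof (Rmax_l (b1/(a1+b1)) (b2/(a2+b2))) as M. rewrite C in M.
      apply Rmult_le_compat_r with (r := a1+b1) in M; [|lra].
      field_simplify in M; lra. }
    assert (ha2 : 0 <= a2).
    { pose proof (Rmax_r (b1/(a1+b1)) (b2/(a2+b2))) as M. rewrite C in M.
      apply Rmult_le_compat_r with (r := a2+b2) in M; [|lra].
      field_simplify in M; lra. }
    split; [lra|].
    apply (build X a1 b1 a2 b2 R1 R2 _ _ ((a1*a2 - kappa*(1-1))/(kappa*1))
             (a2*b1/(kappa*1)) (b2/(kappa*1)) hR1 hR2).
    + field. lra.
    + field. lra.
    + field. lra.
    + intros p n1 n2 H1 H2. exact (case2_ineq X a1 a2 b1 b2 p n1 n2 hb1 hb2 ha1 ha2 H1 H2).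
Qed.
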